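(* For every facility placement profile $\mathbf{s}$ and every client $v$ with $N_{\mathbf{s}}(v)\neq\varnothing$, the client $v$ belongs to $V_j$ where $j=\min\{i: F_i\cap N_{\mathbf{s}}(v)\neq\varnothing\}$.
   Context: Setting: a finite directed graph $H=(V,E,w)$ with vertex weights $w:V\to\mathbb{Q}_{>0}$ (vertices are clients), $w(X)=\sum_{v\in X}w(v)$, a finite set $F$ of facility agents, and a facility placement profile $\mathbf{s}=(s_f)_{f\in F}$ with $s_f\in V$. For $v\in V$ let $N(v)=\{v\}\cup\{u:(v,u)\in E\}$, $N_{\mathbf{s}}(v)=\{f\in F:s_f\in N(v)\}$, $A_{\mathbf{s}}(f)=\{v\in V: f\in N_{\mathbf{s}}(v)\}$ and $A_{\mathbf{s}}(T)=\bigcup_{f\in T}A_{\mathbf{s}}(f)$ for $T\subseteq F$. For nonempty $F^*\subseteq F$ and $V^*\subseteq V$, the minimum neighborhood set $\mathrm{MNS}_{\mathbf{s}}(F^*,V^* )$ is the (unique) subset of $F^*$ of largest cardinality among the nonempty $T\subseteq F^*$ minimizing $\frac{w(A_{\mathbf{s}}(T)\cap V^* )}{|T|}$. The class set is defined inductively: for $i\ge1$, while $F\setminus\bigcup_{j<i}F_j\neq\varnothing$, let $F_i=\mathrm{MNS}_{\mathbf{s}}\big(F\setminus\bigcup_{j<i}F_j,\ V\setminus\bigcup_{j<i}V_j\big)$ and $V_i=A_{\mathbf{s}}(F_i)\setminus\bigcup_{j<i}V_j$; the class is $C_i=(F_i,V_i)$. *)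

(* Defs.v *)
From HB Require Import structures.
From mathcomp Require Import all_boot all_order all_algebra.
Set Implicit Arguments. Unset Strict Implicit. Unset Printing Implicit Defensive.
Import Order.TTheory GRing.Theory Num.Theory.
Local Open Scope ring_scope.

Section FacilityClasses.
Variables (V F : finType) (E : rel V) (w : V -> rat) (s : F -> V).

Definition Nbr (v : V) : {set V} := [set u | (u == v) || E v u].
Definition Ns (v : V) : {set F} := [set f | s f \in Nbr v].
Definition Af (f : F) : {set V} := [set v | f \in Ns v].
Definition AT (T : {set F}) : {set V} := \bigcup_(f in T) Af f.

Definition wset (X : {set V}) : rat := \sum_(v in X) w v.

Definition ratio (Vs : {set V}) (T : {set F}) : rat :=
  wset (AT T :&: Vs) / #|T|%:R.

Definition isMNS (Fs : {set F}) (Vs : {set V}) (T : {set F}) : bool :=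
  [&& T \subset Fs, T != set0,
      [forall T' : {set F}, ((T' \subset Fs) && (T' != set0)) ==>
                            (ratio Vs T <= ratio Vs T')] &
      [forall T' : {set F},
         [&& T' \subset Fs, T' != set0 & ratio Vs T' == ratio Vs T] ==>
         (#|T'| <= #|T|)%N]].

(* MNS_s(Fs, Vs); the paper shows it is unique. *)
Definition MNS (Fs : {set F}) (Vs : {set V}) : {set F} :=
  odflt set0 [pick T | isMNS Fs Vs T].

Definition nextF (UF : {set F}) (UV : {set V}) : {set F} :=
  if ~: UF == set0 then set0 else MNS (~: UF) (~: UV).

(* used n = (F_1 ∪ ... ∪ F_n, V_1 ∪ ... ∪ V_n) *)
Fixpoint used (n : nat) : {set F} * {set V} :=
  match n with
  | 0 => (set0, set0)
  | n'.+1 =>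
      let UF := (used n').1 in let UV := (used n').2 in
      let Fn := nextF UF UV in
      (UF :|: Fn, UV :|: (AT Fn :\: UV))
  end.

(* F_i and V_i for i >= 1 (index 0 is unused and gives the empty set). *)
Definition classF (i : nat) : {set F} :=
  if i is n.+1 then nextF (used n).1 (used n).2 else set0.
Definition classV (i : nat) : {set V} :=
  if i is n.+1 then AT (classF i) :\: (used n).2 else set0.

End FacilityClasses.

(* Main.v *)
Require Import Defs.
From HB Require Import structures.
From mathcomp Require Import all_boot all_order all_algebra.
Import Order.TTheory GRing.Theory Num.Theory.
Local Open Scope ring_scope.

Lemma isMNS_ex (V F : finType) (E : rel V) (w : V -> rat) (s : F -> V)
  (Fs : {set F}) (Vs : {set V}) : Fs != set0 ->
  exists T, isMNS E w s Fs Vs T.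
Proof.
move=> Fs0.
pose P := fun T : {set F} => (T \subset Fs) && (T != set0).
have PFs : P Fs by rewrite /P subxx Fs0.
case: (arg_minP (Defs.ratio E w s Vs) PFs) => T1 /andP[T1s T10] T1min.
pose P' := fun T : {set F} => [&& T \subset Fs, T != set0 & Defs.ratio E w s Vs T == Defs.ratio E w s Vs T1].
have PT1 : P' T1 by rewrite /P' T1s T10 eqxx.
case: (@arg_maxnP {set F} T1 P' (fun T => #|T|) PT1) => T /and3P[Ts T0 /eqP Teq] Tmax.
exists T; apply/and4P; split => //.
  apply/forallP => T'; apply/implyP => HT'; rewrite Teq; exact: T1min.
apply/forallP => T'; apply/implyP => /and3P[a b /eqP c].
apply: Tmax; by rewrite /P' a b c Teq eqxx.
Qed.

Lemma MNS_ne (V F : finType) (E : rel V) (w : V -> rat) (s : F -> V)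
  (Fs : {set F}) (Vs : {set V}) : Fs != set0 ->
  (MNS E w s Fs Vs != set0) && (MNS E w s Fs Vs \subset Fs).
Proof.
move=> Fs0; rewrite /MNS; case: pickP => [T /and4P[-> -> _ _] //|H].
have [T HT] := @isMNS_ex _ _ E w s Fs Vs Fs0.
by rewrite H in HT.
Qed.

Lemma progress (V F : finType) (E : rel V) (w : V -> rat) (s : F -> V) n :
  (n <= #|(used E w s n).1|)%N || ((used E w s n).1 == setT).
Proof.
elim: n => [|n IH] //=.
set UF := (used E w s n).1; set UV := (used E w s n).2.
rewrite /nextF.
case: eqP => [/eqP|/eqP HC].
  move=> /eqP h; rewrite -(setCK UF) h setC0 setTU eqxx orbT //.
have /andP[M0 Ms] := @MNS_ne _ _ E w s _ (~: UV) HC.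
apply/orP; left.
have -> : #|UF :|: MNS E w s (~: UF) (~: UV)| = (#|UF| + #|MNS E w s (~: UF) (~: UV)|)%N.
  rewrite cardsU.
  have -> : UF :&: MNS E w s (~: UF) (~: UV) = set0.
    apply/setP => x; rewrite !inE; apply/negP => /andP[xU xM].
    by move/subsetP: Ms => /(_ x xM); rewrite inE xU.
  by rewrite cards0 subn0.
have : (0 < #|MNS E w s (~: UF) (~: UV)|)%N by rewrite card_gt0.
case/orP: IH => [IH|/eqP UT]; first by move=> h; rewrite -addn1 leq_add.
by move: HC; rewrite /UF UT setCT eqxx.
Qed.

Lemma usedT (V F : finType) (E : rel V) (w : V -> rat) (s : F -> V) :
  (used E w s #|F|).1 = setT.
Proof.
case/orP: (@progress _ _ E w s #|F|) => [H|/eqP //].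
apply/eqP; rewrite eqEcard subsetT cardsT H //.
Qed.

Lemma memF (V F : finType) (E : rel V) (w : V -> rat) (s : F -> V) n f :
  f \in (used E w s n).1 -> exists2 i, (i < n)%N & f \in classF E w s i.+1.
Proof.
elim: n => [|n IH] /=; first by rewrite inE.
rewrite inE => /orP[/IH [i Hi Hf]|Hf]; first by exists i => //; apply: ltnW.
by exists n.
Qed.

Lemma memV (V F : finType) (E : rel V) (w : V -> rat) (s : F -> V) n x :
  x \in (used E w s n).2 -> exists2 i, (i < n)%N & x \in AT E s (classF E w s i.+1).
Proof.
elim: n => [|n IH] /=; first by rewrite inE.
rewrite !inE => /orP[/IH [i Hi Hf]|/andP[_ Hf]]; first by exists i => //; apply: ltnW.
by exists n.
Qed.

Lemma memAT (V F : finType) (E : rel V) (s : F -> V) T v :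
  (v \in AT E s T) = (T :&: Ns E s v != set0).
Proof.
rewrite /AT; apply/bigcupP/set0Pn => [[f fT]|[f]].
  by rewrite /Af inE => H; exists f; rewrite inE fT.
by rewrite inE => /andP[fT H]; exists f; rewrite // /Af inE.
Qed.

Theorem mainTheorem7 (V F : finType) (E : rel V) (w : V -> rat)
  (hw : forall v, 0 < w v) (s : F -> V) (v : V) :
  Ns E s v != set0 ->
  exists j : nat,
    [/\ (0 < j)%N,
        classF E w s j :&: Ns E s v != set0,
        (forall i : nat, (0 < i < j)%N -> classF E w s i :&: Ns E s v = set0)
      & v \in classV E w s j].
Proof.
case/set0Pn => f fN.
have : f \in (used E w s #|F|).1 by rewrite usedT inE.
case/memF => i _ fi.
pose P := fun j => (0 < j)%N && (classF E w s j :&: Ns E s v != set0).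
have exP : exists j, P j.
  by exists i.+1; rewrite /P /=; apply/set0Pn; exists f; rewrite inE fi.
case: (ex_minnP exP) => j /andP[j0 Hj] jmin.
have lt : forall i, (0 < i < j)%N -> classF E w s i :&: Ns E s v = set0.
  move=> k /andP[k0 kj]; apply/eqP; apply: contraTT kj => H.
  by rewrite -leqNgt; apply: jmin; rewrite /P k0.
exists j; split => //.
case: j j0 Hj jmin lt => [//|j] _ Hj _ lt.
rewrite /classV inE memAT Hj andbT.
apply/negP => /memV [k kj].
by rewrite memAT (lt k.+1) ?eqxx //= ltnS.
Qed.
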